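(* Let $\mathcal{M}=\mathcal{M}(a,b,c,d,e,f)$ be a Type $\mathcal{A}$ model which is not flat. Then its Ricci tensor $\rho$ is a multiple of $dx^2\otimes dx^2$ if and only if $b=0$ and $d=0$.
   Context: For $(a,b,c,d,e,f)\in\mathbb{R}^6$, the Type $\mathcal{A}$ model $\mathcal{M}(a,b,c,d,e,f)$ is $(\mathbb{R}^2,\nabla)$ with torsion free connection with constant Christoffel symbols ($\nabla_{\partial_{x^i}}\partial_{x^j}=\Gamma_{ij}{}^k\partial_{x^k}$) $\Gamma_{11}{}^1=a$, $\Gamma_{11}{}^2=b$, $\Gamma_{12}{}^1=\Gamma_{21}{}^1=c$, $\Gamma_{12}{}^2=\Gamma_{21}{}^2=d$, $\Gamma_{22}{}^1=e$, $\Gamma_{22}{}^2=f$. Its Ricci tensor is $\rho=\begin{pmatrix}(a-d)d+b(f-c) & cd-be\\ cd-be & c(f-c)+(a-d)e\end{pmatrix}$; the model is flat iff $\rho=0$. *)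

(* Defs.v *)
From Stdlib Require Import Reals.
Open Scope R_scope.

Inductive idx : Type := i1 | i2.

(* Ricci tensor of the Type A model M(a,b,c,d,e,f), given by the formula
   of the paper:
     rho = [ (a-d)d + b(f-c)    cd - be          ]
           [ cd - be            c(f-c) + (a-d)e  ] *)
Definition ricci (a b c d e f : R) (i j : idx) : R :=
  match i, j with
  | i1, i1 => (a - d) * d + b * (f - c)
  | i1, i2 => c * d - b * e
  | i2, i1 => c * d - b * e
  | i2, i2 => c * (f - c) + (a - d) * e
  end.

Definition flat (a b c d e f : R) : Prop :=
  forall i j : idx, ricci a b c d e f i j = 0.

Definition dx2dx2 (i j : idx) : R :=
  match i, j with
  | i2, i2 => 1
  | _, _ => 0
  end.

Definition ricci_multiple_dx2dx2 (a b c d e f : R) : Prop :=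
  exists lambda : R, forall i j : idx,
    ricci a b c d e f i j = lambda * dx2dx2 i j.

(* Main.v *)
Require Import Defs.
From Stdlib Require Import Reals Lra Psatz.
Open Scope R_scope.

Theorem lemma3p1 (a b c d e f : R) :
  ~ flat a b c d e f ->
  (ricci_multiple_dx2dx2 a b c d e f <-> (b = 0 /\ d = 0)).
Proof.
  intro nf; split.
  - intros [l H].
    pose proof (H i1 i1) as H11; pose proof (H i1 i2) as H12;
    pose proof (H i2 i2) as H22; simpl in H11, H12, H22.
    rewrite Rmult_0_r in H11, H12.
    assert (N : c * (f - c) + (a - d) * e <> 0).
    { intro Z; apply nf; intros [|] [|]; simpl; lra. }
    assert (Hb : b = 0).
    { apply Rmult_eq_reg_r with (c * (f - c) + (a - d) * e); [|exact N].
      rewrite Rmult_0_l.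
      replace (b * (c * (f - c) + (a - d) * e)) with
        (c * ((a - d) * d + b * (f - c)) - (a - d) * (c * d - b * e)) by ring.
      rewrite H11, H12; ring. }
    subst b. split; [reflexivity|].
    apply Rmult_eq_reg_r with (c * (f - c) + (a - d) * e); [|exact N].
    rewrite Rmult_0_l.
    replace (d * (c * (f - c) + (a - d) * e)) with
      ((f - c) * (c * d - 0 * e) + e * ((a - d) * d + 0 * (f - c))) by ring.
    rewrite H11, H12; ring.
  - intros [Hb Hd]; subst b d.
    exists (ricci a 0 c 0 e f i2 i2).
    intros [|] [|]; simpl; ring.
Qed.
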